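(* Let $X$ be a compact metric space and $f\colon X\to X$ continuous with $h_{\mathrm{top}}(f)<\infty$. Let $\Xi=(\xi_1,\dots,\xi_d)\in C(X)^d$ and $\varepsilon>0$ be such that $\overline{B(0,\varepsilon)}\subset\{\int\Xi\,d\mu\mid\mu\in\mathcal{M}^f(X)\}$, and let $\xi_0\in C(X)$. Write $P_0:=\inf_{q\in\mathbb{R}^d}P(\langle q,\Xi\rangle+\xi_0)$. Then (1) for every $q\in\mathbb{R}^d$ with $\|q\|>\frac1\varepsilon(P(\xi_0)+\|\xi_0\|)$, we have $P(\langle q,\Xi\rangle+\xi_0)>P_0$; (2) there exists $\bar q$ with $\|\bar q\|\le\frac1\varepsilon(P(\xi_0)+\|\xi_0\|)$ such that $P(\langle\bar q,\Xi\rangle+\xi_0)=P_0$.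
   Context: $\mathcal{M}^f(X)$ is the set of $f$-invariant Borel probability measures; $P$ is topological pressure on $X$; $\|\xi_0\|$ the sup norm, $\|q\|$ the Euclidean norm; $\int\Xi\,d\mu=(\int\xi_id\mu)_i$; $\langle q,\Xi\rangle=\sum_iq_i\xi_i$; $\overline{B(0,\varepsilon)}$ is the closed Euclidean ball. *)

(* Defs.v *)
From HB Require Import structures.
From mathcomp Require Import all_boot all_order all_algebra.
From mathcomp Require Import all_classical all_reals all_analysis.
Set Implicit Arguments. Unset Strict Implicit. Unset Printing Implicit Defensive.
Import Order.TTheory GRing.Theory Num.Theory.
Import numFieldNormedType.Exports.
Local Open Scope classical_set_scope.
Local Open Scope ring_scope.

(* metric spaces carrying a distinguished point (needed because measurable
   types in MathComp-Analysis are pointed) *)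
#[short(type="pmetricType")]
HB.structure Definition PointedMetric (K : numDomainType) :=
  { M of Pointed M & Metric K M }.

Section Pressure.
Variables (R : realType) (X : pmetricType R) (f : X -> X).

Definition birkhoff (phi : X -> R) (n : nat) (x : X) : R :=
  \sum_(k < n) phi (iter k f x).

Definition separated (n : nat) (eps : R) (E : seq X) : Prop :=
  uniq E /\ forall x y, x \in E -> y \in E -> x != y ->
    exists2 k, (k < n)%N & eps < mdist (iter k f x) (iter k f y).

Definition elog (z : \bar R) : \bar R :=
  match z with
  | r%:E => (ln r)%:E
  | +oo%E => +oo%E
  | -oo%E => -oo%E
  end.

Definition partition_sum (phi : X -> R) (n : nat) (eps : R) : \bar R :=
  ereal_sup [set (\sum_(x <- E) expR (birkhoff phi n x))%:E | E in separated n eps].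

Definition pressure_eps (phi : X -> R) (eps : R) : \bar R :=
  limn_esup (fun n => ((n%:R)^-1)%:E * elog (partition_sum phi n eps))%E.

(* P(phi) = lim_{eps -> 0} pressure_eps phi eps; the map eps |-> pressure_eps
   is nonincreasing, so this limit is the supremum over eps > 0. *)
Definition pressure (phi : X -> R) : \bar R :=
  ereal_sup [set pressure_eps phi eps | eps in [set e : R | 0 < e]].

Definition htop : \bar R := pressure (fun=> 0).

Definition borel_of := g_sigma_algebraType (@open X).

Definition invariant_measure (mu : probability borel_of R) : Prop :=
  forall A : set borel_of, measurable A -> mu (f @^-1` A) = mu A.

End Pressure.

Definition eucl_norm (R : realType) (d : nat) (q : 'rV[R]_d) : R :=
  Num.sqrt (\sum_(i < d) q ord0 i ^+ 2).

Definition sup_norm (R : realType) (X : Type) (g : X -> R) : R :=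
  sup [set `|g x| | x in [set: X]].

Definition qdot (R : realType) (X : Type) (d : nat) (q : 'rV[R]_d)
  (Xi : 'I_d -> X -> R) (x : X) : R :=
  \sum_(i < d) q ord0 i * Xi i x.

(* Main.v *)
Require Import Defs.
From HB Require Import structures.
From mathcomp Require Import all_boot all_order all_algebra.
From mathcomp Require Import all_classical all_reals all_analysis.
From mathcomp Require Import ring lra.
Import Order.TTheory GRing.Theory Num.Theory.
Import numFieldNormedType.Exports.
Local Open Scope classical_set_scope.
Local Open Scope ring_scope.
Local Open Scope ereal_scope.
Lemma esup_lb (R : realType) (u : (\bar R)^nat) (c : \bar R) :
  (forall n, (0 < n)%N -> c <= u n) -> c <= limn_esup u.
Proof.
move=> H; rewrite /limn_esup /limf_esup.
apply: le_ereal_inf_tmp => _ [V [N _ HV] <-].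
apply: le_trans (H (maxn N 1) _) _; first by rewrite leq_max orbT.
apply: ereal_sup_ubound; exists (maxn N 1) => //; apply: HV; by rewrite /= leq_maxl.
Qed.

Lemma esup_ub (R : realType) (u v : (\bar R)^nat) (c : R) :
  (forall n, (0 < n)%N -> u n <= v n + c%:E) -> limn_esup u <= limn_esup v + c%:E.
Proof.
move=> H; rewrite -leeBlDr //.
rewrite /limn_esup /limf_esup.
apply: le_ereal_inf_tmp => _ [V [N _ HV] <-].
rewrite leeBlDr //.
apply: (@le_trans _ _ (ereal_sup (u @` [set n | (maxn N 1 <= n)%N]))).
  apply: ereal_inf_lbound; exists [set n | (maxn N 1 <= n)%N] => //.
  by exists (maxn N 1).
apply: ge_ereal_sup => _ [n hn <-].
apply: le_trans (H n _) _; first by apply: leq_trans hn; rewrite leq_maxr.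
apply: leeD2r; apply: ereal_sup_ubound; exists n => //; apply: HV.
by apply: leq_trans hn; rewrite leq_maxl.
Qed.

Section P.
Variables (R : realType) (X : pmetricType R) (f : X -> X).

Lemma sep1 n e (x : X) : Defs.separated f n e [:: x].
Proof.
split => // a b; rewrite !inE => /eqP -> /eqP ->; by rewrite eqxx.
Qed.

Lemma Zge phi n e (x : X) :
  (expR (birkhoff f phi n x))%:E <= partition_sum f phi n e.
Proof.
apply: ereal_sup_ubound; exists [:: x]; first exact: sep1.
by rewrite big_seq1.
Qed.

Lemma Zpos phi n e : 0 < partition_sum f phi n e.
Proof.
apply: lt_le_trans (Zge phi n e point); by rewrite lte_fin expR_gt0.
Qed.

Lemma elog_mono (a : R) z : (0 < a)%R -> a%:E <= z -> (ln a)%:E <= elog z.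
Proof.
case: z => [r| |] //= a0; rewrite ?lee_fin => ar //.
rewrite ler_ln // posrE //; exact: lt_le_trans ar.
by rewrite leey.
Qed.

Lemma elog_le (z1 z2 : \bar R) : 0 < z1 -> z1 <= z2 -> elog z1 <= elog z2.
Proof.
case: z1 => [r| |] //= r0 h.
- by apply: elog_mono.
- by move: h; rewrite leye_eq => /eqP ->.
Qed.

Lemma elogM (k : R) (z : \bar R) : (0 < k)%R -> 0 < z -> elog (k%:E * z) = (ln k)%:E + elog z.
Proof.
move=> k0; case: z => [r| |] //= r0.
- by rewrite -EFinD lnM // posrE // -lte_fin.
- by rewrite gt0_muley ?lte_fin // addey.
Qed.

Lemma press_lb phi (c : R) :
  (forall n, (0 < n)%N -> exists x, (n%:R * c <= birkhoff f phi n x)%R) ->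
  c%:E <= pressure f phi.
Proof.
move=> H.
apply: (@le_trans _ _ (pressure_eps f phi 1%R)); last first.
  by apply: ereal_sup_ubound; exists 1%R => //; exact: ltr01.
apply: esup_lb => n n0.
have [x hx] := H n n0.
have h1 : (n%:R * c)%:E <= elog (partition_sum f phi n 1%R).
  apply: (@le_trans _ _ (ln (expR (birkhoff f phi n x)))%:E); last first.
    by apply: elog_mono; [exact: expR_gt0 | exact: Zge].
  by rewrite expRK lee_fin.
have -> : c%:E = (n%:R^-1)%:E * (n%:R * c)%:E.
  by rewrite -EFinM mulrA mulVf ?mul1r // pnatr_eq0 -lt0n.
by apply: lee_wpmul2l => //; rewrite lee_fin invr_ge0 ler0n.
Qed.

Lemma birk_le (phi psi : X -> R) (c : R) n x : (forall x, phi x <= psi x + c)%R ->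
  (birkhoff f phi n x <= birkhoff f psi n x + n%:R * c)%R.
Proof.
move=> H; rewrite /birkhoff mulr_natl -[X in (c *+ X)%R](card_ord n) -sumr_const -big_split /=.
by apply: ler_sum => k _; apply: H.
Qed.

Lemma press_ub (phi psi : X -> R) (c : R) : (forall x, phi x <= psi x + c)%R ->
  pressure f phi <= pressure f psi + c%:E.
Proof.
move=> H; apply: ge_ereal_sup => _ [e e0 <-].
apply: (@le_trans _ _ (pressure_eps f psi e + c%:E)); last first.
  by apply: leeD2r; apply: ereal_sup_ubound; exists e.
apply: esup_ub => n n0.
have hZ : partition_sum f phi n e <= (expR (n%:R * c))%:E * partition_sum f psi n e.
  apply: ge_ereal_sup => _ [E sE <-].
  apply: (@le_trans _ _ ((expR (n%:R * c))%:E * (\sum_(x <- E) expR (birkhoff f psi n x))%:E)).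
    rewrite -EFinM lee_fin mulr_sumr; apply: ler_sum => x _.
    by rewrite -expRD ler_expR addrC; apply: birk_le.
  by apply: lee_wpmul2l; [rewrite lee_fin expR_ge0 | apply: ereal_sup_ubound; exists E].
have hl : elog (partition_sum f phi n e) <= ((n%:R * c)%R)%:E + elog (partition_sum f psi n e).
  rewrite -{1}(expRK (n%:R * c)%R) -elogM ?expR_gt0 ?Zpos //.
  by apply: elog_le => //; apply: Zpos.
apply: (@le_trans _ _ ((n%:R^-1)%:E * (((n%:R * c)%R)%:E + elog (partition_sum f psi n e)))).
  by apply: lee_wpmul2l => //; rewrite lee_fin invr_ge0 ler0n.
rewrite muleDr // -EFinM mulrA mulVf ?mul1r ?pnatr_eq0 -?lt0n // addeC.
done.
Qed.
End P.
Local Close Scope ereal_scope.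
Section S.
Variables (R : realType) (X : pmetricType R) (f : X -> X).

Lemma meas_cont (g : X -> R) : continuous g -> measurable_fun [set: borel_of X] (g : borel_of X -> R).
Proof.
move=> cg; apply: (measurability _ (measurable_realfun.RGenOpens.measurableE R)).
move=> _ [_ [a [b ->] <-]]; rewrite setTI; apply: sub_sigma_algebra.
by apply: (proj1 (continuousP _) cg); exact: interval_open.
Qed.

Lemma meas_f : continuous f -> measurable_fun [set: borel_of X] (f : borel_of X -> borel_of X).
Proof.
move=> cf; have mE : @measurable _ (borel_of X) = <<s @open X >> by [].
apply: (measurability _ mE).
move=> _ [A oA <-]; rewrite setTI; apply: sub_sigma_algebra.
exact: (proj1 (continuousP _) cf).
Qed.
Hypothesis cX : compact [set: X].

Lemma bnd_cont (g : X -> R) : continuous g -> exists M : R, forall x, `|g x| <= M.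
Proof.
move=> cg.
have : compact (g @` [set: X]).
  by apply: continuous_compact => //; apply: continuous_subspaceT.
move=> /compact_bounded [M [Mreal HM]].
exists (M + 1) => x; apply: (HM (M + 1)); first by rewrite ltrDl.
by exists x.
Qed.

Lemma int_cont (mu : probability (borel_of X) R) (g : X -> R) : continuous g ->
  mu.-integrable [set: borel_of X] (EFin \o (g : borel_of X -> R)).
Proof.
move=> cg; apply: measurable_bounded_integrable => //.
- exact: (le_lt_trans (probability_le1 mu measurableT) (ltry 1)).
- exact: meas_cont.
have [M HM] := bnd_cont _ cg.
exists M; split; first exact: num_real.
by move=> y My x _; apply: le_trans (HM x) (ltW My).
Qed.

Lemma int_inv (mu : probability (borel_of X) R) : continuous f -> invariant_measure f mu ->
  forall g : X -> R, continuous g ->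
  (\int[mu]_x (g (f x))%:E = \int[mu]_x (g x)%:E)%E.
Proof.
move=> cf inv g cg.
have mf := meas_f cf.
move: (meas_cont _ cg) => /measurable_realfun.measurable_EFinP mg.
have cgf : continuous (g \o f) by move=> x; apply: continuous_comp; [apply: cf|apply: cg].
have ig := @int_cont mu _ cgf.
have := integral_pushforward mf mg ig measurableT.
rewrite preimage_setT => <-.
apply: eq_measure_integral => A mA _.
rewrite /pushforward; exact: inv.
Qed.

Hypothesis cf : continuous f.

Lemma cont_iter k : continuous (iter k f).
Proof.
elim: k => [|k IH] /=; first by move=> x; exact: cvg_id.
by move=> x; apply: continuous_comp; [apply: IH | apply: cf].
Qed.

Lemma cont_gi (g : X -> R) k : continuous g -> continuous (fun x => g (iter k f x)).
Proof. by move=> cg x; apply: continuous_comp; [apply: cont_iter | apply: cg]. Qed.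

Lemma cont_birk (g : X -> R) n : continuous g -> continuous (birkhoff f g n).
Proof.
move=> cg; elim: n => [|n IH].
  have -> : birkhoff f g 0 = cst 0 by apply/funext => x; rewrite /birkhoff big_ord0.
  exact: cst_continuous.
have -> : birkhoff f g n.+1 = (fun x => birkhoff f g n x + g (iter n f x)).
  by apply/funext => x; rewrite /birkhoff big_ord_recr.
by move=> x; apply: continuousD; [apply: IH | apply: cont_gi].
Qed.

Variable mu : probability (borel_of X) R.
Hypothesis inv : invariant_measure f mu.
Local Open Scope ereal_scope.

Lemma int_iter (g : X -> R) k : continuous g ->
  \int[mu]_x (g (iter k f x))%:E = \int[mu]_x (g x)%:E.
Proof.
move=> cg; elim: k => [//|k IH].
rewrite -IH.
have := @int_inv mu cf inv _ (cont_gi _ k cg) => /= <-.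
by apply: eq_integral => x _; rewrite -iterSr.
Qed.

Lemma int_fin (g : X -> R) : continuous g -> exists r, \int[mu]_x (g x)%:E = r%:E.
Proof.
move=> cg; have := int_cont mu _ cg => /(integrable_fin_num measurableT).
by case: (\int[mu]_x _) => // r; exists r.
Qed.

Lemma int_birk (g : X -> R) n : continuous g ->
  \int[mu]_x (birkhoff f g n x)%:E = (n%:R)%:E * \int[mu]_x (g x)%:E.
Proof.
move=> cg; have [r hr] := int_fin _ cg; rewrite hr.
elim: n => [|n IH].
  rewrite mul0e; under eq_integral => x _ do rewrite /birkhoff big_ord0.
  by rewrite integral0.
under eq_integral => x _ do rewrite /birkhoff big_ord_recr /= EFinD.
rewrite integralD //.
- rewrite [X in X + _]IH int_iter // hr -EFinM -EFinD -addn1 natrD; congr EFin; ring.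
- exact: (int_cont mu _ (cont_birk _ n cg)).
- exact: (int_cont mu _ (cont_gi _ n cg)).
Qed.

Lemma exists_birk (g : X -> R) (r eta : R) n : continuous g ->
  \int[mu]_x (g x)%:E = r%:E -> (0 < eta)%R -> (0 < n)%N ->
  exists x, (n%:R * (r - eta) <= birkhoff f g n x)%R.
Proof.
move=> cg hr e0 n0.
case: (pselect (exists x, (n%:R * (r - eta) <= birkhoff f g n x)%R)) => // /forallNP H.
exfalso.
have hlt : forall x, (birkhoff f g n x <= n%:R * (r - eta))%R.
  by move=> x; have /negP := H x; rewrite -ltNge => /ltW.
have hle : \int[mu]_x (birkhoff f g n x)%:E <= \int[mu]_x (cst ((n%:R * (r - eta))%R%:E) x).
  apply: le_integral => //.
  - exact: (int_cont mu _ (cont_birk _ n cg)).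
  - exact: (int_cont mu _ (@cst_continuous _ _ _)).
  - by move=> x _; rewrite lee_fin hlt.
move: hle; rewrite int_birk // hr.
rewrite integral_cst //.
rewrite [X in (_ <= _ * X)%E](_ : _ = 1%E) ?mule1; last exact: probability_setT.
rewrite -EFinM lee_fin.
by rewrite ler_pM2l ?ltr0n // lerDl oppr_ge0 leNgt e0.
Qed.


Lemma int_le_press (g : X -> R) : continuous g ->
  \int[mu]_x (g x)%:E <= pressure f g.
Proof.
move=> cg; have [r hr] := int_fin _ cg; rewrite hr.
apply/lee_subgt0Pr => e e0; rewrite -EFinB.
apply: press_lb => n n0; exact: exists_birk.
Qed.
End S.
Local Close Scope ereal_scope.

Section M.
Variables (R : realType) (X : pmetricType R) (f : X -> X).
Hypothesis cX : compact [set: X].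
Hypothesis cf : continuous f.

Lemma cont_sum (I : Type) (s : seq I) (F : I -> X -> R) :
  (forall i, continuous (F i)) -> continuous (fun x => \sum_(i <- s) F i x).
Proof.
move=> cF; elim: s => [|a s IH].
  have -> : (fun x => \sum_(i <- [::]) F i x) = cst 0 by apply/funext => x; rewrite big_nil.
  exact: cst_continuous.
have -> : (fun x => \sum_(i <- a :: s) F i x) = (fun x => F a x + \sum_(i <- s) F i x).
  by apply/funext => x; rewrite big_cons.
by move=> x; apply: continuousD; [apply: cF | apply: IH].
Qed.

Lemma press_fin (phi : X -> R) : continuous phi -> (htop f < +oo)%E ->
  exists r, pressure f phi = r%:E.
Proof.
move=> cphi hh; have [M HM] := @bnd_cont R X cX _ cphi.
apply/EFin_fin_numP/fin_numPlt/andP; split.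
  apply: (@lt_le_trans _ _ (- M)%:E); first exact: ltNyr.
  apply: press_lb => n n0; exists point.
  have := @birk_le _ _ f (fun=> - M) phi 0 n point.
  rewrite mulr0 addr0 /birkhoff sumr_const card_ord mulr_natl; apply => x.
  by rewrite addr0 lerNl; apply: le_trans (HM x); rewrite -normrN ler_norm.
apply: (@le_lt_trans _ _ (htop f + M%:E)).
  apply: press_ub => x; rewrite add0r; apply: le_trans (HM x); exact: ler_norm.
move: hh; case: (htop f) => // h _; exact: ltry.
Qed.

Lemma entry_le_eucl d (v : 'rV[R]_d) i : `|v ord0 i| <= eucl_norm v.
Proof.
rewrite /eucl_norm -sqrtr_sqr ler_sqrt ?sumr_ge0 // => [|j _]; last exact: sqr_ge0.
rewrite (bigD1 i) //= lerDl sumr_ge0 // => j _; exact: sqr_ge0.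
Qed.

Lemma entry_le d (v : 'rV[R]_d) i : `|v ord0 i| <= `|v|.
Proof.
rewrite [leRHS]/Num.norm /= mx_normrE; apply/bigmax_geP; right => /=.
by exists (ord0, i).
Qed.

Lemma mxnorm_le_eucl d (v : 'rV[R]_d) : `|v| <= eucl_norm v.
Proof.
rewrite [leLHS]/Num.norm /= mx_normrE; apply: bigmax_le => [|[a b] _].
  by rewrite /eucl_norm sqrtr_ge0.
by rewrite /= (ord1 a); apply: entry_le_eucl.
Qed.

Lemma press_lb_cst (phi : X -> R) (c : R) : (forall x, c <= phi x) ->
  (c%:E <= pressure f phi)%E.
Proof.
move=> H; apply: press_lb => n n0; exists point.
have := @birk_le _ _ f (fun=> c) phi 0 n point.
rewrite mulr0 addr0 /birkhoff sumr_const card_ord mulr_natl; apply => x.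
by rewrite addr0.
Qed.
End M.

Lemma lip_cont (R : realType) d (F : 'rV[R]_d -> R) (K : R) : 0 <= K ->
  (forall a b, `|F a - F b| <= K * `|a - b|) -> continuous F.
Proof.
move=> K0 H a; apply/(@cvgrPdist_le _ _ _ (nbhs a) (nbhs_filter a)) => e e0.
have d0 : 0 < e / (K + 1) by rewrite divr_gt0 // ltr_wpDl.
have := @nbhsx_ballx _ _ a _ d0.
apply: filterS => b; rewrite -ball_normE /ball_ /= => /ltW hb.
apply: le_trans (H a b) _.
apply: le_trans (ler_wpM2l K0 hb) _.
rewrite mulrA ler_pdivrMr ?ltr_wpDl // mulrDr mulr1 mulrC lerDl ltW //.
Qed.
Local Close Scope ereal_scope.

Theorem lemma4p5 (R : realType) (X : pmetricType R) (f : X -> X) (d : nat)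
  (Xi : 'I_d -> X -> R) (xi0 : X -> R) (eps : R) :
  compact [set: X] ->
  continuous f ->
  (htop f < +oo)%E ->
  (forall i, continuous (Xi i)) ->
  continuous xi0 ->
  0 < eps ->
  (forall v : 'rV[R]_d, eucl_norm v <= eps ->
     exists mu : probability (borel_of X) R,
       invariant_measure f mu /\
       forall i : 'I_d, (\int[mu]_x (Xi i x)%:E)%E = (v ord0 i)%:E) ->
  let P0 := ereal_inf [set pressure f (fun x => (qdot q Xi x + xi0 x)%R) | q in [set: 'rV[R]_d]] in
  let bound := ((pressure f xi0 + (sup_norm xi0)%:E) * (eps^-1)%:E)%E in
  (forall q : 'rV[R]_d, (bound < (eucl_norm q)%:E)%E ->
     (P0 < pressure f (fun x => (qdot q Xi x + xi0 x)%R))%E) /\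
  (exists qb : 'rV[R]_d, ((eucl_norm qb)%:E <= bound)%E /\
     pressure f (fun x => (qdot qb Xi x + xi0 x)%R) = P0).
Proof.
move=> cX cf hh cXi cxi0 e0 hmu P0 bound.
pose g (q : 'rV[R]_d) := fun x => (qdot q Xi x + xi0 x)%R.
have cXiq : forall q : 'rV[R]_d, forall i, continuous (fun x => q ord0 i * Xi i x).
  by move=> q i x; apply: continuousM; [exact: cst_continuous | exact: cXi].
have cq : forall q : 'rV[R]_d, continuous (qdot q Xi).
  by move=> q; rewrite /qdot; exact: (@cont_sum R X _ (index_enum _) _ (cXiq q)).
have cg : forall q, continuous (g q).
  by move=> q x; apply: continuousD; [exact: cq | exact: cxi0].
have g0 : g 0 = xi0.
  apply/funext => x; rewrite /g /qdot big1 ?add0r // => i _; by rewrite mxE mul0r.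
have /choice [Qr HQ] : forall q, exists r : R, pressure f (g q) = r%:E.
  by move=> q; apply: press_fin.
set p := Qr 0.
have Hp : pressure f xi0 = p%:E by rewrite -HQ g0.
set s := sup_norm xi0.
have [M0 HM0] := @bnd_cont R X cX _ cxi0.
have hs : forall x, `|xi0 x| <= s.
  move=> x; apply: sup_upper_bound; last by exists x.
  split; first by exists `|xi0 point|, point.
  by exists M0 => _ [y _ <-].
have hps : 0 <= p + s.
  have : ((- s)%:E <= pressure f xi0)%E.
    by apply: press_lb_cst => x; rewrite lerNl; apply: le_trans (hs x); rewrite -normrN ler_norm.
  by rewrite Hp lee_fin -subr_ge0 opprK addrC.
have C1 : forall q, (p + s) / eps < eucl_norm q -> p < Qr q.
  move=> q hq.
  set N := eucl_norm q in hq *.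
  have N0 : 0 < N by apply: le_lt_trans hq; rewrite divr_ge0 // ltW.
  have hN2 : \sum_(i < d) q ord0 i ^+ 2 = N ^+ 2.
    by rewrite /N /eucl_norm sqr_sqrtr // sumr_ge0 // => i _; exact: sqr_ge0.
  pose v := (eps / N) *: q.
  have hv : eucl_norm v = eps.
    rewrite /eucl_norm; under eq_bigr => i _ do rewrite mxE exprMn.
    rewrite -mulr_sumr sqrtrM ?sqr_ge0 // sqrtr_sqr ger0_norm ?divr_ge0 ?ltW //.
    by rewrite -/(eucl_norm q) -/N divfK // gt_eqF.
  have [mu [inv hint]] : exists mu : probability (borel_of X) R, invariant_measure f mu /\ forall i, (\int[mu]_x (Xi i x)%:E)%E = (v ord0 i)%:E.
    by apply: hmu; rewrite hv.
  have hle := @int_le_press R X f cX cf mu inv _ (cg q).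
  rewrite HQ in hle.
  have hI : (\int[mu]_x (g q x)%:E = (eps * N)%:E + \int[mu]_x (xi0 x)%:E)%E.
    under eq_integral => x _ do rewrite /g EFinD.
    rewrite integralD //; last 2 first.
    - exact: (@int_cont R X cX mu _ (cq q)).
    - exact: (@int_cont R X cX mu _ cxi0).
    congr (_ + _)%E.
    under eq_integral => x _ do rewrite /qdot -sumEFin.
    rewrite integral_sum //; last first.
      by move=> i; exact: (@int_cont R X cX mu _ (cXiq q i)).
    rewrite (eq_bigr (fun i => (q ord0 i * v ord0 i)%:E)); last first.
      move=> i _; under eq_integral => x _ do rewrite EFinM.
      rewrite integralZl //; first by rewrite hint -EFinM.
      exact: (@int_cont R X cX mu _ (cXi i)).
    rewrite sumEFin; congr EFin.
    rewrite (eq_bigr (fun i => eps / N * q ord0 i ^+ 2)); last first.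
      by move=> i _; rewrite mxE; ring.
    by rewrite -mulr_sumr hN2 expr2 mulrA divfK // gt_eqF.
  have hxi : ((- s)%:E <= \int[mu]_x (xi0 x)%:E)%E.
    apply: (@le_trans _ _ (\int[mu]_x (cst ((-s)%:E) x))%E).
      rewrite integral_cst // [X in (_ <= _ * X)%E](_ : _ = 1%E) ?mule1 //.
      exact: probability_setT.
    apply: le_integral => //.
    - exact: (@int_cont R X cX mu _ (@cst_continuous _ _ _)).
    - exact: (@int_cont R X cX mu _ cxi0).
    - by move=> x _; rewrite lee_fin lerNl; apply: le_trans (hs x); rewrite -normrN ler_norm.
  have h2 : ((eps * N - s)%:E <= (Qr q)%:E)%E.
    by apply: le_trans hle; rewrite hI EFinB; apply: leeD2l.
  rewrite lee_fin in h2; apply: lt_le_trans h2.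
  by rewrite ltrBrDr mulrC -ltr_pdivrMr.
have Hb : bound = ((p + s) / eps)%:E by rewrite /bound Hp -EFinD -EFinM.
have HQ0 : (P0 <= p%:E)%E.
  apply: (@le_trans _ _ (pressure f (g 0))); last by rewrite HQ.
  by apply: ereal_inf_lbound; exists 0.
split.
  move=> q; rewrite Hb lte_fin => hq.
  apply: le_lt_trans HQ0 _.
  have := HQ q; rewrite /g /= => ->.
  by rewrite lte_fin; apply: C1.
set b := (p + s) / eps.
have b0 : 0 <= b by rewrite divr_ge0 // ltW.
have b1 : 0 < b + 1 by apply: ltr_wpDl b0 ltr01.
pose K := [set q : 'rV[R]_d | `|q| <= b + 1].
have KE : K = closed_ball (0 : 'rV[R]_d) (b + 1).
  rewrite closed_ballE //; apply/seteqP; split => q /=.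
  by rewrite /closed_ball_ /K /= sub0r normrN.
  by rewrite /closed_ball_ /K /= sub0r normrN.
have cK : compact K.
  apply: bounded_closed_compact; last by rewrite KE; exact: closed_ball_closed.
  exists (b + 1); split; first exact: num_real.
  by move=> y hy q Kq; apply: le_trans Kq (ltW hy).
have /choice [Mi HMi] : forall i : 'I_d, exists M : R, forall x, `|Xi i x| <= M.
  by move=> i; exact: (@bnd_cont R X cX _ (cXi i)).
set KK := \sum_(i < d) Mi i.
have KK0 : 0 <= KK.
  by apply: sumr_ge0 => i _; apply: le_trans (normr_ge0 _) (HMi i point).
have Lip : forall a c, Qr a <= Qr c + KK * `|a - c|.
  move=> a c; rewrite -lee_fin EFinD -!HQ; apply: press_ub => x.
  rewrite /g /qdot [in leRHS]addrAC lerD2r.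
  rewrite /KK mulr_suml -big_split /=.
  apply: ler_sum => i _.
  have h1 : (a ord0 i - c ord0 i) * Xi i x <= `|a - c| * Mi i.
    apply: le_trans (ler_norm _) _; rewrite normrM.
    apply: ler_pM => //.
    by have := @entry_le R d (a - c) i; rewrite !mxE.
  by rewrite mulrBl in h1; rewrite [Mi i * _]mulrC -lerBlDl.
have cQ : continuous Qr.
  apply: (@lip_cont R d Qr KK KK0) => a c; rewrite ler_norml; apply/andP; split.
    by rewrite lerNl opprB lerBlDr addrC distrC; exact: Lip.
  by rewrite lerBlDr addrC; exact: Lip.
have K0 : (0 : 'rV[R]_d) \in K by apply: mem_set; rewrite /K /= normr0 ltW.
have [qb Kqb hmin] := @EVT_min_rV R d Qr K (ex_intro _ 0 (set_mem K0)) cK (continuous_subspaceT cQ).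
have hqb : eucl_norm qb <= b.
  rewrite leNgt; apply/negP => /C1 h.
  by have := hmin 0 K0; rewrite leNgt h.
exists qb; split; first by rewrite Hb lee_fin.
have := HQ qb; rewrite /g /= => ->.
apply/eqP; rewrite eq_le; apply/andP; split.
  apply: le_ereal_inf_tmp => _ [q _ <-].
  have := HQ q; rewrite /g /= => ->; rewrite lee_fin.
  case: (leP (eucl_norm q) b) => hq.
    apply: hmin; apply: mem_set; rewrite /K /=.
    apply: le_trans (@mxnorm_le_eucl _ _ q) _; apply: le_trans hq _.
    by rewrite lerDl.
  by apply: le_trans (hmin 0 K0) _; apply: ltW; exact: C1.
by apply: ereal_inf_lbound; exists qb => //; rewrite -HQ.
Qed.
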